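(* Let $N,M,L$ be positive integers and $\sigma^2>0$. Let $\hat\alpha_i,\hat\alpha_j\in\mathbb C$, $\hat{\mathbf G}_i,\hat{\mathbf G}_j\in\mathbb C^{N\times M}$, $\mathbf a_i,\mathbf a_j\in\mathbb C^N$, $\boldsymbol\theta\in\mathbb C^N$ with $|\boldsymbol\theta(n)|=1$ for all $n$, and $\mathbf x\in\mathbb C^M$. Set $\boldsymbol\Theta=\mathrm{diag}(\boldsymbol\theta)$, $\mathbf X=[\mathbf x,\dots,\mathbf x]\in\mathbb C^{M\times L}$, and for $k\in\{i,j\}$ let $\bar{\mathbf y}_k=\mathrm{vec}\big(\hat\alpha_k\hat{\mathbf G}_k^T\boldsymbol\Theta\mathbf a_k\mathbf a_k^T\boldsymbol\Theta\hat{\mathbf G}_k\mathbf X\big)$ and $d=\frac{1}{\sigma^2}\|\bar{\mathbf y}_i-\bar{\mathbf y}_j\|^2$. Define $\mathbf Q=\boldsymbol\theta\boldsymbol\theta^H$ and, for $k,l\in\{i,j\}$, $$\mathbf A_{k,l}=\big(\hat{\mathbf G}_l^{*}\hat{\mathbf G}_k^{T}\big)\odot\big(\mathbf a_k\mathbf a_l^H\big)^T,\qquad \mathbf B_{k,l}=\big(\mathbf a_l^{*}\mathbf a_k^T\big)\odot\big(\hat{\mathbf G}_k\mathbf x\mathbf x^H\hat{\mathbf G}_l^H\big)^T.$$ Then $d=\varphi$, where $$\varphi=\frac{L}{\sigma^2}\Big(|\hat\alpha_i|^2\mathrm{tr}\big(\mathbf Q^H\mathbf A_{i,i}\mathbf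 Q\mathbf B_{i,i}\big)-2\Re\big\{\hat\alpha_i\hat\alpha_j^{*}\mathrm{tr}\big(\mathbf Q^H\mathbf A_{i,j}\mathbf Q\mathbf B_{i,j}\big)\big\}+|\hat\alpha_j|^2\mathrm{tr}\big(\mathbf Q^H\mathbf A_{j,j}\mathbf Q\mathbf B_{j,j}\big)\Big).$$
   Context: $\odot$ is the Hadamard (entrywise) product, $(\cdot)^*$ entrywise complex conjugate, $(\cdot)^T$ transpose, $(\cdot)^H$ conjugate transpose, $\mathrm{vec}$ column-stacking vectorization, $\|\cdot\|$ the Euclidean norm. In the paper $d$ is the (symmetrized relative-entropy) distance between the Gaussian observation models under two target-location hypotheses $i$ and $j$. *)

(* Defs.v *)
(* complex numbers as an arbitrary numClosedFieldType C
   (e.g. algC, or complex R for R : rcfType); conjugation is Num.conj. *)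
From HB Require Import structures.
From mathcomp Require Import all_boot all_order all_algebra.
Set Implicit Arguments. Unset Strict Implicit. Unset Printing Implicit Defensive.
Import Order.TTheory GRing.Theory Num.Theory.
Local Open Scope ring_scope.

Section Defs.
Variable C : numClosedFieldType.

Definition conjm m n (A : 'M[C]_(m, n)) : 'M[C]_(m, n) := map_mx Num.conj A.
Definition ctrmx m n (A : 'M[C]_(m, n)) : 'M[C]_(n, m) := (conjm A)^T.
Definition hadamard m n (A B : 'M[C]_(m, n)) : 'M[C]_(m, n) :=
  \matrix_(i, j) (A i j * B i j).
(* column-stacking vectorization: entry (i,j) of A goes to index j*m+i *)
Definition vec m n (A : 'M[C]_(m, n)) : 'cV[C]_(n * m) := (mxvec A^T)^T.
Definition normsq k (v : 'cV[C]_k) : C := \sum_(i < k) `|v i 0| ^+ 2.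

Definition repcol M L (x : 'cV[C]_M) : 'M[C]_(M, L) := \matrix_(i, l) x i 0.

Definition ybar N M L (alpha : C) (G : 'M[C]_(N, M)) (a theta : 'cV[C]_N)
    (x : 'cV[C]_M) : 'cV[C]_(L * M) :=
  let Theta := diag_mx theta^T in
  vec (alpha *: (G^T *m Theta *m a *m a^T *m Theta *m G *m repcol L x)).

Definition Amx N M (Gk Gl : 'M[C]_(N, M)) (ak al : 'cV[C]_N) : 'M[C]_N :=
  hadamard (conjm Gl *m Gk^T) (ak *m ctrmx al)^T.

Definition Bmx N M (Gk Gl : 'M[C]_(N, M)) (ak al : 'cV[C]_N) (x : 'cV[C]_M)
    : 'M[C]_N :=
  hadamard (conjm al *m ak^T) (Gk *m x *m ctrmx x *m ctrmx Gl)^T.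

End Defs.

(* Main.v *)
Require Import Defs.
From HB Require Import structures.
From mathcomp Require Import all_boot all_order all_algebra.
From mathcomp Require Import ring.
Import Order.TTheory GRing.Theory Num.Theory.
Local Open Scope ring_scope.
Set Implicit Arguments. Unset Strict Implicit.

Section H.
Variable C : numClosedFieldType.

Lemma normsq_vecB m n (A B : 'M[C]_(m, n)) :
  normsq (vec A - vec B) = \sum_i \sum_j `|A i j - B i j| ^+ 2.
Proof.
rewrite /normsq exchange_big pair_bigA (reindex _ (curry_mxvec_bij _ _)) /=.
apply: eq_bigr => -[j i] _ /=.
by rewrite !mxE /= !mxvecE !mxE.
Qed.

Definition vv N M (G : 'M[C]_(N, M)) (a th : 'cV[C]_N) : 'cV[C]_M :=
  G^T *m diag_mx th^T *m a.
Definition uu N M (G : 'M[C]_(N, M)) (a th : 'cV[C]_N) (x : 'cV[C]_M) : C :=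
  (a^T *m diag_mx th^T *m G *m x) 0 0.

Lemma Yentry N M L (G : 'M[C]_(N, M)) (a th : 'cV[C]_N) (x : 'cV[C]_M) p l :
  (G^T *m diag_mx th^T *m a *m a^T *m diag_mx th^T *m G *m repcol L x) p l
  = vv G a th p 0 * uu G a th x.
Proof.
have -> : G^T *m diag_mx th^T *m a *m a^T *m diag_mx th^T *m G *m repcol L x
  = (G^T *m diag_mx th^T *m a) *m (a^T *m diag_mx th^T *m G *m repcol L x)
  by rewrite !mulmxA.
rewrite mxE big_ord1 /vv /uu; congr (_ * _).
by rewrite !mxE; apply: eq_bigr => q _; rewrite !mxE.
Qed.

Lemma ctrmx_mul m n p (A : 'M[C]_(m, n)) (B : 'M[C]_(n, p)) :
  ctrmx (A *m B) = ctrmx B *m ctrmx A.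
Proof. by rewrite /ctrmx /conjm map_mxM trmx_mul. Qed.

Lemma ctrmx_entry m n (A : 'M[C]_(m, n)) i j : ctrmx A i j = (A j i)^*.
Proof. by rewrite !mxE. Qed.

Lemma trQ N (th : 'cV[C]_N) (A B : 'M[C]_N) :
  \tr (ctrmx (th *m ctrmx th) *m A *m (th *m ctrmx th) *m B)
  = (ctrmx th *m A *m th) 0 0 * (ctrmx th *m B *m th) 0 0.
Proof.
have -> : ctrmx (th *m ctrmx th) = th *m ctrmx th.
  by apply/matrixP => i j; rewrite !mxE !big_ord1 !mxE rmorphM /= conjCK mulrC.
have -> : th *m ctrmx th *m A *m (th *m ctrmx th) *m B
  = th *m (ctrmx th *m A *m th *m ctrmx th *m B) by rewrite !mulmxA.
rewrite mxtrace_mulC trace_mx11.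
have -> : ctrmx th *m A *m th *m ctrmx th *m B *m th
  = (ctrmx th *m A *m th) *m (ctrmx th *m B *m th) by rewrite !mulmxA.
by rewrite mxE big_ord1.
Qed.

Lemma quadE N (th : 'cV[C]_N) (A : 'M[C]_N) :
  (ctrmx th *m A *m th) 0 0 = \sum_m (\sum_n (th n 0)^* * A n m) * th m 0.
Proof. by rewrite mxE; apply: eq_bigr => m _; rewrite mxE; congr (_ * _);
  apply: eq_bigr => n _; rewrite !mxE. Qed.

Lemma uuE N M (G : 'M[C]_(N, M)) (a th : 'cV[C]_N) (x : 'cV[C]_M) :
  uu G a th x = \sum_m a m 0 * th m 0 * (G *m x) m 0.
Proof.
rewrite /uu -mulmxA mxE; apply: eq_bigr => m _.
by rewrite mul_mx_diag !mxE.
Qed.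

Lemma vvE N M (G : 'M[C]_(N, M)) (a th : 'cV[C]_N) p :
  vv G a th p 0 = \sum_m G m p * th m 0 * a m 0.
Proof.
rewrite /vv mxE; apply: eq_bigr => m _.
by rewrite mul_mx_diag !mxE.
Qed.

Lemma quadB N M (Gk Gl : 'M[C]_(N, M)) (ak al th : 'cV[C]_N) (x : 'cV[C]_M) :
  (ctrmx th *m Bmx Gk Gl ak al x *m th) 0 0 = uu Gk ak th x * (uu Gl al th x)^*.
Proof.
rewrite quadE !uuE rmorph_sum mulr_suml; apply: eq_bigr => m _.
rewrite mulr_suml mulr_sumr; apply: eq_bigr => n _.
rewrite /Bmx /hadamard.
have -> : Gk *m x *m ctrmx x *m ctrmx Gl = (Gk *m x) *m ctrmx (Gl *m x)
  by rewrite ctrmx_mul mulmxA.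
rewrite !mxE big_ord1 !mxE big_ord1 !mxE !rmorphM.
rewrite /=; ring.
Qed.

Lemma quadA N M (Gk Gl : 'M[C]_(N, M)) (ak al th : 'cV[C]_N) :
  (ctrmx th *m Amx Gk Gl ak al *m th) 0 0
  = \sum_p (vv Gl al th p 0)^* * vv Gk ak th p 0.
Proof.
rewrite quadE /Amx /hadamard.
transitivity (\sum_(m < N) \sum_(n < N) \sum_(p < M)
   ((Gl n p)^* * (th n 0)^* * (al n 0)^*) * (Gk m p * th m 0 * ak m 0)).
  apply: eq_bigr => m _; rewrite mulr_suml; apply: eq_bigr => n _.
  rewrite !mxE big_ord1 !mxE mulr_suml mulr_sumr mulr_suml; apply: eq_bigr => p _.
  rewrite !mxE /=; ring.
rewrite exchange_big /=.
transitivity (\sum_(n < N) \sum_(p < M) \sum_(m < N)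
   ((Gl n p)^* * (th n 0)^* * (al n 0)^*) * (Gk m p * th m 0 * ak m 0)).
  by apply: eq_bigr => n _; rewrite exchange_big.
rewrite exchange_big /=; apply: eq_bigr => p _.
rewrite !vvE rmorph_sum mulr_suml; apply: eq_bigr => n _.
rewrite mulr_sumr; apply: eq_bigr => m _.
rewrite !rmorphM /=; ring.
Qed.

End H.

Theorem proposition3 (C : numClosedFieldType) (N M L : nat)
  (hN : (0 < N)%N) (hM : (0 < M)%N) (hL : (0 < L)%N)
  (sigma2 : C) (hsigma : 0 < sigma2)
  (alpha_i alpha_j : C) (G_i G_j : 'M[C]_(N, M)) (a_i a_j theta : 'cV[C]_N)
  (x : 'cV[C]_M)
  (htheta : forall n : 'I_N, `|theta n 0| = 1) :
  let d := sigma2^-1 * normsq (ybar L alpha_i G_i a_i theta x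
                               - ybar L alpha_j G_j a_j theta x) in
  let Q := theta *m ctrmx theta in
  let T (Gk Gl : 'M[C]_(N, M)) (ak al : 'cV[C]_N) :=
      \tr (ctrmx Q *m Amx Gk Gl ak al *m Q *m Bmx Gk Gl ak al x) in
  let phi := (L%:R / sigma2) *
      (`|alpha_i| ^+ 2 * T G_i G_i a_i a_i
       - 2%:R * 'Re (alpha_i * Num.conj alpha_j * T G_i G_j a_i a_j)
       + `|alpha_j| ^+ 2 * T G_j G_j a_j a_j) in
  d = phi.
Proof.
move=> d Q T phi; rewrite /d /phi /T /Q !trQ !quadA !quadB /ybar normsq_vecB.
have sE : forall a (A : 'M[C]_(M, L)) i j, (a *: A) i j = a * A i j.
  by move=> *; rewrite mxE.
under eq_bigr => p _ do (under eq_bigr => l _ do rewrite !sE !Yentry).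
under eq_bigr => p _ do rewrite sumr_const card_ord.
under eq_bigr => p _ do rewrite -mulr_natr.
rewrite -mulr_suml.
set K := (X in _ = _ * X).
suff -> : \sum_p `|alpha_i * (vv G_i a_i theta p 0 * uu G_i a_i theta x) -
      alpha_j * (vv G_j a_j theta p 0 * uu G_j a_j theta x)| ^+ 2 = K.
  by ring.
rewrite /K ReE.
have h2 : forall z : C, 2%:R * ((z + z^*) / 2) = z + z^*.
  by move=> z; rewrite mulrC -mulrA mulVf ?mulr1 // pnatr_eq0.
rewrite h2 !rmorphM rmorph_sum /= !normCK !mulr_suml !mulr_sumr.
rewrite -big_split -sumrB -big_split /=; apply: eq_bigr => p _.
rewrite normCK !rmorphB !rmorphM /= !conjCK; ring.
Qed.
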